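(* Let $p,q$ be distributions on $[n]$ and $m_1,m_2>0$. Let $X_i\sim\mathrm{Poisson}(m_1p_i)$ and $Y_i\sim\mathrm{Poisson}(m_2q_i)$, $i\in[n]$, all mutually independent, and let $$Z_i=\frac{(m_2X_i-m_1Y_i)^2-(m_2^2X_i+m_1^2Y_i)}{X_i+Y_i}$$ (with $Z_i=0$ when $X_i+Y_i=0$). For $A\subseteq[n]$, if $p=q$ then $\mathbb E\left[\sum_{i\in A}Z_i\right]=0$, and in general $$\mathbb E\left[\sum_{i\in A}Z_i\right]\geq\frac{m_1^2m_2^2\left(\sum_{i\in A}|p_i-q_i|\right)^2}{4n+m_1+m_2}.$$ *)

(* Defs.v *)
From HB Require Import structures.
From mathcomp Require Import all_boot all_order all_algebra.
From mathcomp Require Import all_classical all_reals all_analysis.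
Set Implicit Arguments. Unset Strict Implicit. Unset Printing Implicit Defensive.
Import Order.TTheory GRing.Theory Num.Theory.
Local Open Scope classical_set_scope.
Local Open Scope ring_scope.

Definition is_distribution (R : realType) (n : nat) (p : 'I_n -> R) : Prop :=
  (forall i, 0 <= p i) /\ \sum_(i < n) p i = 1.

Definition mutually_independent d (T : measurableType d) (R : realType)
    (P : probability T R) (I : finType) (V : I -> {RV P >-> nat}) : Prop :=
  forall (J : {set I}) (B : I -> set nat),
    (forall j, measurable (B j)) ->
    P (\bigcap_(j in [set` J]) (V j @^-1` B j)) =
    (\prod_(j in J) P (V j @^-1` B j))%E.

(* X has the Poisson distribution with mean r (r >= 0; r = 0 gives X = 0 a.s.) *)
Definition has_poisson_law d (T : measurableType d) (R : realType)
    (P : probability T R) (r : R) (X : {RV P >-> nat}) : Prop :=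
  forall U : set nat, measurable U -> distribution P X U = poisson_prob r 0%N U.

Definition Zstat (R : realType) (m1 m2 : R) (x y : nat) : R :=
  if (x + y)%N == 0%N then 0
  else ((m2 * x%:R - m1 * y%:R) ^+ 2 - (m2 ^+ 2 * x%:R + m1 ^+ 2 * y%:R))
       / (x + y)%:R.

(* Main.v *)
Require Import Defs.
From HB Require Import structures.
From mathcomp Require Import all_boot all_order all_algebra.
From mathcomp Require Import all_classical all_reals all_analysis.
From mathcomp Require Import ring lra.
Import Order.TTheory GRing.Theory Num.Theory.
Set Implicit Arguments. Unset Strict Implicit.
Local Open Scope classical_set_scope.
Local Open Scope ring_scope.

Unset Implicit Arguments.
Section alg.
Variable R : realType.

Definition pw (r : R) (x : nat) : R := if 0 < r then poisson_pmf r x else (x == 0)%:R.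

Lemma pw_ge0 r x : 0 <= pw r x.
Proof. rewrite /pw; case: ifP => _; [exact: poisson_pmf_ge0| by case: (x == 0)]. Qed.

Lemma pw_shift r x : 0 <= r -> x.+1%:R * pw r x.+1 = r * pw r x.
Proof.
rewrite /pw => r0; case: ifPn => rp.
  rewrite /poisson_pmf rp factS natrM exprS.
  have h1 : (x.+1%:R : R) != 0 by rewrite pnatr_eq0.
  have h2 : (x`!%:R : R) != 0 by rewrite pnatr_eq0 -lt0n fact_gt0.
  rewrite invfM; field. by rewrite nat1r h1 h2.
have -> : r = 0 by apply/le_anti; rewrite r0 andbT; rewrite ltNge negbK in rp.
by rewrite !mul0r /= mulr0.
Qed.
End alg.
Set Implicit Arguments.


Section conv.
Variable R : realType.
Variables (u v : nat -> R) (a b : R).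
Hypothesis hu : forall x, x.+1%:R * u x.+1 = a * u x.
Hypothesis hv : forall x, x.+1%:R * v x.+1 = b * v x.

Definition convol (u v : nat -> R) t := \sum_(x < t.+1) u x * v (t - x)%N.

Lemma conv_sym (F : nat -> nat -> R) t :
  \sum_(x < t.+1) F x (t - x)%N = \sum_(x < t.+1) F (t - x)%N x.
Proof.
rewrite (reindex_inj rev_ord_inj) /=; apply: eq_bigr => i _.
by rewrite subSS subKn // -ltnS.
Qed.

Lemma I1 t : \sum_(x < t.+3) x%:R * (x%:R - 1) * u x * v (t.+2 - x)%N = a ^+ 2 * convol u v t.
Proof.
rewrite big_ord_recl big_ord_recl /= mul0r !mul0r add0r subrr mulr0 !mul0r add0r.
rewrite /convol mulr_sumr; apply: eq_bigr => i _.
rewrite /bump /= !add1n.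
have -> : (i.+2%:R : R) - 1 = i.+1%:R by rewrite -[i.+2]addn1 natrD addrK.
rewrite subSS subSS.
have e : i.+2%:R * i.+1%:R * u i.+2 = i.+1%:R * (i.+2%:R * u i.+2) by ring.
rewrite e hu.
have e2 : i.+1%:R * (a * u i.+1) = a * (i.+1%:R * u i.+1) by ring.
by rewrite e2 hu; ring.
Qed.

Lemma I2 t : \sum_(x < t.+3) x%:R * (t.+2 - x)%N%:R * u x * v (t.+2 - x)%N = a * b * convol u v t.
Proof.
rewrite big_ord_recl /= !mul0r add0r big_ord_recr /= subnn !mulr0 !mul0r addr0.
rewrite /convol mulr_sumr; apply: eq_bigr => i _.
rewrite /bump /= !add1n subSS.
have hi : (i <= t)%N by rewrite -ltnS.
rewrite subSn //.
have e : i.+1%:R * (t - i).+1%:R * u i.+1 * v (t - i).+1 =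
   (i.+1%:R * u i.+1) * ((t - i).+1%:R * v (t - i).+1) by ring.
by rewrite e hu hv; ring.
Qed.

Lemma conv_symm t : convol u v t = convol v u t.
Proof. by rewrite /convol (conv_sym (fun x y => u x * v y)); apply: eq_bigr => i _; rewrite mulrC. Qed.

End conv.

Section conv2.
Variable R : realType.
Variables (u v : nat -> R) (a b : R).
Hypothesis hu : forall x, x.+1%:R * u x.+1 = a * u x.
Hypothesis hv : forall x, x.+1%:R * v x.+1 = b * v x.

Lemma I3 t : \sum_(x < t.+3) (t.+2 - x)%N%:R * ((t.+2 - x)%N%:R - 1) * u x * v (t.+2 - x)%N
   = b ^+ 2 * convol u v t.
Proof.
rewrite (conv_sym (fun x y => y%:R * (y%:R - 1) * u x * v y)) /=.
rewrite (conv_symm u v) -(I1 u hv); apply: eq_bigr => i _; ring.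
Qed.

Lemma I4 t : t.+1%:R * convol u v t.+1 = (a + b) * convol u v t.
Proof.
have -> : t.+1%:R * convol u v t.+1 =
  \sum_(x < t.+2) x%:R * u x * v (t.+1 - x)%N + \sum_(x < t.+2) (t.+1 - x)%N%:R * u x * v (t.+1 - x)%N.
  rewrite /convol mulr_sumr -big_split /=; apply: eq_bigr => i _.
  have hi : (i <= t.+1)%N by rewrite -ltnS.
  have -> : (t.+1%:R : R) = i%:R + (t.+1 - i)%N%:R by rewrite -natrD subnKC.
  ring.
rewrite big_ord_recl /= !mul0r add0r [X in _ + X = _]big_ord_recr /= subnn !mul0r addr0 mulrDl.
congr (_ + _); rewrite /convol mulr_sumr; apply: eq_bigr => i _.
  rewrite /bump /= add1n subSS.
  by rewrite hu mulrA.
have hi : (i <= t)%N by rewrite -ltnS.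
rewrite subSn //.
have e : (t - i).+1%:R * u i * v (t - i).+1 = u i * ((t - i).+1%:R * v (t - i).+1) by ring.
by rewrite e hv; ring.
Qed.

Definition GZ (m1 m2 : R) t := \sum_(x < t.+1) Zstat m1 m2 x (t - x)%N * u x * v (t - x)%N.

Lemma GZ_SS m1 m2 t : GZ m1 m2 t.+2 = (m2 * a - m1 * b) ^+ 2 * (convol u v t / t.+2%:R).
Proof.
have ht : (t.+2%:R : R) != 0 by rewrite pnatr_eq0.
have -> : GZ m1 m2 t.+2 = (m2 ^+ 2 * \sum_(x < t.+3) x%:R * (x%:R - 1) * u x * v (t.+2 - x)%N
   - 2 * m1 * m2 * \sum_(x < t.+3) x%:R * (t.+2 - x)%N%:R * u x * v (t.+2 - x)%N
   + m1 ^+ 2 * \sum_(x < t.+3) (t.+2 - x)%N%:R * ((t.+2 - x)%N%:R - 1) * u x * v (t.+2 - x)%N) / t.+2%:R.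
  rewrite !mulr_sumr -sumrB -big_split /= mulr_suml; apply: eq_bigr => i _.
  have hi : (i <= t.+2)%N by rewrite -ltnS.
  rewrite /Zstat subnKC //.
  rewrite /=; field; rewrite gt_eqF //; have := ler0n R t; lra.
rewrite (I1 v hu t) (I2 hu hv t) (I3 t); field; rewrite gt_eqF //; have := ler0n R t; lra.
Qed.

Lemma GZ_0 m1 m2 : GZ m1 m2 0 = 0.
Proof. by rewrite /GZ big_ord1 /Zstat /= !mul0r. Qed.

Lemma GZ_1 m1 m2 : GZ m1 m2 1 = 0.
Proof.
rewrite /GZ big_ord_recl big_ord1 /Zstat /= /bump /=.
rewrite !mulr0 !mulr1 !subr0 !add0r !addr0 sqrrN expr2 subrr. ring.
Qed.
End conv2.


Lemma key_real (R : realType) (lam c : R) (i : nat) : 0 <= lam -> 0 <= c ->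
  c * ((2 * (lam+2) - 2) / (lam+2) ^+ 2) <= c / i.+2%:R + i%:R * c * ((lam+2) ^+ 2)^-1.
Proof.
move=> l0 c0.
have L0 : 0 < lam + 2 by lra.
have I0 : 0 < i.+2%:R :> R by rewrite ltr0Sn.
rewrite -subr_ge0.
have -> : c / i.+2%:R + i%:R * c * ((lam+2) ^+ 2)^-1 - c * ((2 * (lam+2) - 2) / (lam+2) ^+ 2)
   = c * (lam + 2 - i.+2%:R) ^+ 2 / (i.+2%:R * (lam+2) ^+ 2).
  rewrite -[i.+2]addn2 natrD; field.
  apply/andP; split; apply: lt0r_neq0; [lra | have := ler0n R i; lra].
apply: divr_ge0; first by apply: mulr_ge0 => //; exact: sqr_ge0.
apply: mulr_ge0; [exact: ltW | exact: sqr_ge0].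
Qed.

Lemma key_nonneg (R : realType) (lam : R) : 0 <= lam -> 0 <= (2 * (lam+2) - 2) / (lam+2) ^+ 2.
Proof. move=> l0; apply: divr_ge0; [lra| apply: exprn_ge0; lra]. Qed.

Section ser.
Variable R : realType.
Local Open Scope ereal_scope.

Lemma eseries_shift1 (f : nat -> \bar R) : (forall k, 0 <= f k) ->
  \sum_(k <oo) f k = f 0%N + \sum_(k <oo) f k.+1.
Proof.
move=> f0; rewrite (@nneseries_split _ _ 0 1) //= big_nat1.
congr (_ + _); rewrite -nneseries_addn //.
by apply: eq_eseriesr => i _; rewrite add0n addn1.
Qed.

Variables (C : nat -> R) (lam : R).
Hypothesis C0 : forall t, (0 <= C t)%R.
Hypothesis lam0 : (0 <= lam)%R.
Hypothesis Csum : \sum_(t <oo) (C t)%:E = 1.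
Hypothesis Cshift : forall t, (t.+1%:R * C t.+1 = lam * C t)%R.

Lemma Cmoment : \sum_(t <oo) (t%:R * C t)%:E = lam%:E.
Proof.
rewrite eseries_shift1; last by move=> k; rewrite lee_fin mulr_ge0.
rewrite mul0r add0e.
under eq_eseriesr do rewrite Cshift EFinM.
rewrite (@nneseriesZl _ _ xpredT) //=; last by move=> i _; rewrite lee_fin. by rewrite Csum mule1.
Qed.

Definition sig := \sum_(t <oo) (C t / t.+2%:R)%:E.

Lemma sig_le1 : sig <= 1.
Proof.
rewrite -Csum; apply: lee_nneseries => [i _ _|i _].
  by rewrite lee_fin divr_ge0.
rewrite lee_fin ler_pdivrMr ?ltr0Sn //.
by rewrite ler_peMr // ler1n.
Qed.

Lemma sig_ge0 : 0 <= sig.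
Proof. by apply: nneseries_ge0 => i _ _; rewrite lee_fin divr_ge0. Qed.

Lemma sig_ge : ((lam + 2)^-1)%:E <= sig.
Proof.
have key : \sum_(t <oo) (C t * ((2 * (lam+2) - 2) / (lam+2) ^+ 2))%:E <=
    \sum_(t <oo) ((C t / t.+2%:R)%:E + (t%:R * C t * ((lam+2) ^+ 2)^-1)%:E).
  apply: lee_nneseries => [i _ _|i _].
    by rewrite lee_fin mulr_ge0 // key_nonneg.
  by rewrite -EFinD lee_fin key_real.
rewrite nneseriesD in key; last 2 first.
- by move=> i _ _; rewrite lee_fin divr_ge0.
- by move=> i _ _; rewrite lee_fin mulr_ge0 ?mulr_ge0 // invr_ge0 exprn_ge0 // addr_ge0.
have e1 : \sum_(t <oo) (C t * ((2 * (lam+2) - 2) / (lam+2) ^+ 2))%:E =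
   ((2 * (lam+2) - 2) / (lam+2) ^+ 2)%:E.
  under eq_eseriesr do rewrite mulrC EFinM.
  rewrite (@nneseriesZl _ _ xpredT) /=; last by move=> i _; rewrite lee_fin.
  by rewrite Csum mule1.
have e2 : \sum_(i <oo) (i%:R * C i / (lam + 2) ^+ 2)%:E = (lam / (lam + 2) ^+ 2)%:E.
  under eq_eseriesr do rewrite mulrC EFinM.
  rewrite (@nneseriesZl _ _ xpredT) /=; last by move=> i _; rewrite lee_fin mulr_ge0.
  by rewrite Cmoment -EFinM mulrC.
rewrite e1 e2 -/sig in key.
have -> : ((lam + 2)^-1 = (2 * (lam+2) - 2) / (lam+2) ^+ 2 - lam / (lam + 2) ^+ 2)%R.
  have L0 : (lam + 2 != 0)%R by apply: lt0r_neq0; rewrite ltr_wpDl.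
  by field.
by rewrite EFinB leeBlDr.
Qed.

Lemma sum_W (M D : R) (g : nat -> R) : (0 <= M)%R -> (0 <= D)%R -> g 0%N = 0%R -> g 1%N = 0%R ->
  (forall t, g t.+2 = D * (C t / t.+2%:R))%R ->
  \sum_(t <oo) (M * C t + g t)%:E = M%:E + D%:E * sig.
Proof.
move=> M0 D0 g0 g1 gS.
have gge : forall t, (0 <= g t)%R.
  by case=> [|[|t]]; rewrite ?g0 ?g1 ?gS // mulr_ge0 // divr_ge0.
under eq_eseriesr do rewrite EFinD.
rewrite nneseriesD; last 2 first.
- by move=> i _ _; rewrite lee_fin mulr_ge0.
- by move=> i _ _; rewrite lee_fin.
congr (_ + _).
  under eq_eseriesr do rewrite EFinM.
  by rewrite (@nneseriesZl _ _ xpredT) /= ?Csum ?mule1 // => i _; rewrite lee_fin.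
rewrite eseries_shift1; last by move=> k; rewrite lee_fin.
rewrite eseries_shift1; last by move=> k; rewrite lee_fin.
rewrite g0 g1 !add0e.
under eq_eseriesr do rewrite gS EFinM.
by rewrite (@nneseriesZl _ _ xpredT) //= => i _; rewrite lee_fin divr_ge0.
Qed.
End ser.


Lemma series_single (R : realType) (f : nat -> \bar R) t0 :
  (forall t, (0 <= f t)%E) -> (forall t, t != t0 -> f t = 0%E) ->
  (\sum_(t <oo) f t)%E = f t0.
Proof.
move=> f0 fz; rewrite (@nneseries_split _ _ 0 t0.+1) // add0n.
rewrite eseries0 ?adde0; last by move=> i hi _; apply: fz; rewrite gtn_eqF.
rewrite big_nat_recr //= big1_seq ?add0e // => i /andP[_]; rewrite mem_index_iota => /andP[_ hi].
by apply: fz; rewrite ltn_eqF.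
Qed.

Section meas.
Context d (T : measurableType d) (R : realType) (P : probability T R).
Variables (X Y : {RV P >-> nat}).
Variables (u v : nat -> R).
Hypothesis hXY : forall x y, P (X @^-1` [set x] `&` Y @^-1` [set y]) = (u x * v y)%:E.

Definition EE x y := X @^-1` [set x] `&` Y @^-1` [set y].

Lemma mEE x y : measurable (EE x y).
Proof. by apply: measurableI; apply: measurable_funPTI. Qed.

Lemma indE x y w : \1_(EE x y) w = ((X w == x) && (Y w == y))%:R :> R.
Proof.
rewrite indicE; case: (pselect (EE x y w)) => [[hx hy]|hn].
  by rewrite mem_set //= hx hy !eqxx.
rewrite memNset //; case: eqP => // hx; case: eqP => // hy.
by exfalso; apply: hn; split.
Qed.

Lemma Fval (g : nat -> nat -> R) t w :
  (\sum_(x < t.+1) (g x (t - x)%N * \1_(EE x (t - x)%N) w)%:E)%E =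
  if t == (X w + Y w)%N then (g (X w) (Y w))%:E else 0%E.
Proof.
case: eqP => [->| ne].
  have hx : (X w < (X w + Y w).+1)%N by rewrite ltnS leq_addr.
  rewrite (bigD1 (Ordinal hx)) //= big1 ?adde0.
    by rewrite indE eqxx addKn eqxx mulr1.
  move=> i hi; rewrite indE.
  case: eqP => [e|_]; last by rewrite mulr0.
  by exfalso; move/eqP: hi; apply; apply: val_inj; exact: (esym e).
apply: big1 => i _; rewrite indE.
case: eqP => [e|_]; last by rewrite mulr0.
case: eqP => [e'|_]; last by rewrite mulr0.
exfalso; apply: ne; rewrite e e' subnKC // -ltnS //.
Qed.

Lemma ptw (g : nat -> nat -> R) w : (forall x y, 0 <= g x y) ->
  (g (X w) (Y w))%:E = (\sum_(t <oo) (\sum_(x < t.+1) (g x (t - x)%N * \1_(EE x (t - x)%N) w)%:E))%E.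
Proof.
move=> g0; under eq_eseriesr do rewrite Fval.
rewrite (series_single _ (t0 := (X w + Y w)%N)).
- by rewrite eqxx.
- by move=> t; case: ifP => _ //; rewrite lee_fin.
- by move=> t /negbTE ->.
Qed.

Lemma meas_g (g : nat -> nat -> R) : (forall x y, 0 <= g x y) ->
  measurable_fun setT (fun w => g (X w) (Y w)).
Proof.
move=> g0; apply/measurable_realfun.measurable_EFinP.
rewrite (_ : EFin \o _ = fun w => \sum_(t <oo | t \in xpredT)
   (\sum_(x < t.+1) (g x (t - x)%N * \1_(EE x (t - x)%N) w)%:E))%E; last first.
  by apply/funext => w /=; rewrite ptw //; apply: eq_eseriesl.
apply: ge0_emeasurable_sum.
- move=> n w _ _; apply: sume_ge0 => i _; rewrite lee_fin mulr_ge0 //.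
- move=> n _; apply: emeasurable_sum => i; apply/measurable_realfun.measurable_EFinP.
  by apply: measurable_realfun.measurable_funM => //; apply: measurable_realfun.measurable_indic; apply: mEE.
Qed.

Lemma core (g : nat -> nat -> R) : (forall x y, 0 <= g x y) ->
  (\int[P]_w (g (X w) (Y w))%:E =
  \sum_(t <oo) (\sum_(x < t.+1) g x (t - x)%N * u x * v (t - x)%N)%:E)%E.
Proof.
move=> g0.
transitivity (\int[P]_w \sum_(t <oo) (\sum_(x < t.+1) (g x (t - x)%N * \1_(EE x (t - x)%N) w)%:E))%E.
  by apply: eq_integral => w _; rewrite ptw.
rewrite integral_nneseries //; last first.
- move=> n w _; apply: sume_ge0 => i _; rewrite lee_fin mulr_ge0 //.
- move=> n; apply: emeasurable_sum => i; apply/measurable_realfun.measurable_EFinP.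
  by apply: measurable_realfun.measurable_funM => //; apply: measurable_realfun.measurable_indic; apply: mEE.
apply: eq_eseriesr => t _.
rewrite ge0_integral_sum //; last first.
- by move=> i w _; rewrite lee_fin mulr_ge0.
- move=> i; apply/measurable_realfun.measurable_EFinP.
  by apply: measurable_realfun.measurable_funM => //; apply: measurable_realfun.measurable_indic; apply: mEE.
rewrite -sumEFin; apply: eq_bigr => i _.
rewrite (@integralZl_indic _ _ _ P setT measurableT (fun _ => EE i (t - i)%N)); last 2 first.
- by rewrite ltNge g0.
- exact: mEE.
rewrite integral_indic //; last exact: mEE.
rewrite setIT; transitivity ((g i (t - i)%N)%:E * (u i * v (t - i)%N)%:E)%E.
  by congr (_ * _)%E; exact: hXY.
by rewrite -EFinM mulrA.
Qed.
End meas.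



Lemma Zstat_ge (R : realType) (m1 m2 : R) x y : 0 <= Zstat m1 m2 x y + (m1 ^+ 2 + m2 ^+ 2).
Proof.
rewrite /Zstat; case: eqP => [_|h].
  by rewrite add0r addr_ge0 // sqr_ge0.
have t0 : 0 < (x + y)%N%:R :> R by rewrite ltr0n lt0n; apply/eqP.
have -> : ((m2 * x%:R - m1 * y%:R) ^+ 2 - (m2 ^+ 2 * x%:R + m1 ^+ 2 * y%:R)) / (x + y)%N%:R +
   (m1 ^+ 2 + m2 ^+ 2) = ((m2 * x%:R - m1 * y%:R) ^+ 2 + (m1 ^+ 2 * x%:R + m2 ^+ 2 * y%:R)) / (x + y)%N%:R.
  rewrite natrD in t0 *; field; exact: lt0r_neq0.
apply: divr_ge0; last exact: ltW.
by rewrite addr_ge0 ?sqr_ge0 // addr_ge0 // mulr_ge0 // sqr_ge0.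
Qed.

Section per_i.
Context d (T : measurableType d) (R : realType) (P : probability T R).
Variables (X Y : {RV P >-> nat}) (a b m1 m2 : R).
Hypotheses (a0 : 0 <= a) (b0 : 0 <= b).
Hypothesis hXY : forall x y, P (X @^-1` [set x] `&` Y @^-1` [set y]) = (pw R a x * pw R b y)%:E.

Lemma per_i : exists s : R, (a + b + 2)^-1 <= s <= 1 /\
  (\int[P]_w (Zstat m1 m2 (X w) (Y w) + (m1 ^+ 2 + m2 ^+ 2))%:E =
   ((m1 ^+ 2 + m2 ^+ 2) + (m2 * a - m1 * b) ^+ 2 * s)%:E)%E.
Proof.
set u := pw R a; set v := pw R b; set C := convol u v.
have hu : forall x, x.+1%:R * u x.+1 = a * u x by move=> x; exact: pw_shift.
have hv : forall x, x.+1%:R * v x.+1 = b * v x by move=> x; exact: pw_shift.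
have C0 : forall t, 0 <= C t.
  by move=> t; apply: sumr_ge0 => i _; apply: mulr_ge0; apply: pw_ge0.
have Csum : (\sum_(t <oo) (C t)%:E = 1)%E.
  have h := core hXY (g := fun _ _ => 1) (fun _ _ => ler01).
  rewrite integral_cst // mul1e in h.
  transitivity (P [set: T]); last exact: probability_setT.
  rewrite h; apply: eq_eseriesr => t _; congr EFin; apply: eq_bigr => i _; by rewrite mul1r.
have Cshift : forall t, t.+1%:R * C t.+1 = (a + b) * C t by move=> t; exact: I4.
have lam0 : 0 <= a + b by rewrite addr_ge0.
have sge := sig_ge C0 lam0 Csum Cshift.
have sle := sig_le1 C0 Csum.
have sfin : sig C \is a fin_num.
  by rewrite ge0_fin_numE ?(le_trans _ sge) ?(le_lt_trans sle) ?ltry // lee_fin invr_ge0 addr_ge0.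
exists (fine (sig C)); split.
  by apply/andP; split; rewrite -lee_fin fineK.
rewrite (core hXY (g := fun x y => Zstat m1 m2 x y + (m1 ^+ 2 + m2 ^+ 2))); last by move=> x y; exact: Zstat_ge.
rewrite EFinD EFinM fineK //.
rewrite -(sum_W C0 Csum (g := GZ u v m1 m2)) //.
- apply: eq_eseriesr => t _; congr EFin.
  rewrite /GZ /C /convol mulr_sumr -big_split /=; apply: eq_bigr => i _.
  rewrite /u /v; ring.
- by rewrite addr_ge0 // sqr_ge0.
- exact: sqr_ge0.
- exact: GZ_0.
- exact: GZ_1.
- by move=> t; exact: GZ_SS.
Qed.
End per_i.


Lemma tangent (R : realType) (x s v th : R) : 0 < v -> v^-1 <= s ->
  2 * th * x - th ^+ 2 * v <= x ^+ 2 * s.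
Proof.
move=> v0 vs.
apply: (@le_trans _ _ (x ^+ 2 / v)); last by rewrite ler_wpM2l // sqr_ge0.
rewrite -subr_ge0.
have -> : x ^+ 2 / v - (2 * th * x - th ^+ 2 * v) = (x - th * v) ^+ 2 / v.
  by field; exact: lt0r_neq0.
by apply: divr_ge0; [exact: sqr_ge0| exact: ltW].
Qed.

Lemma sum_sub_le (R : realType) n (F : 'I_n -> R) (A : {set 'I_n}) :
  (forall i, 0 <= F i) -> \sum_(i in A) F i <= \sum_(i < n) F i.
Proof.
move=> F0; rewrite big_mkcond /=; apply: ler_sum => i _.
by case: ifP.
Qed.

Lemma final_ineq (R : realType) n (p q : 'I_n -> R) (m1 m2 : R) (s : 'I_n -> R) (A : {set 'I_n}) :
  is_distribution p -> is_distribution q -> 0 < m1 -> 0 < m2 ->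
  (forall i, (m1 * p i + m2 * q i + 2)^-1 <= s i) ->
  m1 ^+ 2 * m2 ^+ 2 * (\sum_(i in A) `|p i - q i|) ^+ 2 / (4 * n%:R + m1 + m2) <=
  \sum_(i in A) (m2 * (m1 * p i) - m1 * (m2 * q i)) ^+ 2 * s i.
Proof.
move=> [p0 p1] [q0 q1] m10 m20 hs.
set U := \sum_(i in A) `|p i - q i|.
set N := 4 * n%:R + m1 + m2.
have n0 : 0 <= n%:R :> R by exact: ler0n.
have N0 : 0 < N by rewrite /N; lra.
set th := U / N.
set K := m1 ^+ 2 * m2 ^+ 2.
have K0 : 0 <= K by rewrite /K mulr_ge0 // sqr_ge0.
have hV : \sum_(i in A) (m1 * p i + m2 * q i + 2) <= N.
  apply: (@le_trans _ _ (\sum_(i < n) (m1 * p i + m2 * q i + 2))).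
    apply: sum_sub_le => i; rewrite addr_ge0 // addr_ge0 // mulr_ge0 // ltW //.
  rewrite !big_split /= -!mulr_sumr p1 q1 sumr_const card_ord /N.
  lra.
have step : \sum_(i in A) K * (2 * th * `|p i - q i| - th ^+ 2 * (m1 * p i + m2 * q i + 2))
   <= \sum_(i in A) (m2 * (m1 * p i) - m1 * (m2 * q i)) ^+ 2 * s i.
  apply: ler_sum => i _.
  have -> : (m2 * (m1 * p i) - m1 * (m2 * q i)) ^+ 2 * s i = K * (`|p i - q i| ^+ 2 * s i).
    by rewrite real_normK ?num_real // /K; ring.
  apply: ler_wpM2l => //; apply: tangent => //.
  by rewrite ltr_wpDl // addr_ge0 // mulr_ge0 // ltW.
apply: le_trans step.
rewrite -mulr_sumr sumrB -!mulr_sumr -/U.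
have -> : K * U ^+ 2 / N = K * (2 * th * U - th ^+ 2 * N).
  by rewrite /th; field; exact: lt0r_neq0.
apply: ler_wpM2l => //; rewrite lerD2l lerN2.
apply: ler_wpM2l => //; exact: sqr_ge0.
Qed.


Lemma law_pt d (T : measurableType d) (R : realType) (P : probability T R) (r : R)
  (Z : {RV P >-> nat}) : has_poisson_law r Z -> forall x,
  P (Z @^-1` [set x]) = (pw R r x)%:E.
Proof.
move=> h x; have := h [set x] I.
rewrite /distribution /pushforward /= => ->.
rewrite /poisson_prob /pw; case: ifP => _.
  by rewrite esum_set1 // lee_fin poisson_pmf_ge0.
rewrite diracE; case: (eqVneq x 0%N) => [->|hx].
  by rewrite mem_set.
by rewrite memNset //= => h0; move: hx; rewrite h0 eqxx.
Qed.

Lemma indep_pair d (T : measurableType d) (R : realType) (P : probability T R) n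
  (X Y : 'I_n -> {RV P >-> nat}) :
  mutually_independent
    (fun j : ('I_n + 'I_n)%type => match j with inl i => X i | inr i => Y i end) ->
  forall i x y, P (X i @^-1` [set x] `&` Y i @^-1` [set y]) =
    (P (X i @^-1` [set x]) * P (Y i @^-1` [set y]))%E.
Proof.
move=> hind i x y.
pose V := fun j : ('I_n + 'I_n)%type => match j with inl i => X i | inr i => Y i end.
pose B := fun j : ('I_n + 'I_n)%type => match j with inl _ => [set x] | inr _ => [set y] end.
pose J := [set inl i; inr i]%SET.
have h := hind J B (fun _ => I).
have e1 : X i @^-1` [set x] `&` Y i @^-1` [set y] = \bigcap_(j in [set` J]) (V j @^-1` B j).
  apply/seteqP; split => w.
    move=> [hx hy] j; rewrite /= !inE => /orP[/eqP->|/eqP->] //.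
  move=> hw; split.
    by have := hw (inl i); apply; rewrite /= !inE eqxx.
  by have := hw (inr i); apply; rewrite /= !inE eqxx orbT.
rewrite e1; transitivity (\prod_(j in J) P (V j @^-1` B j))%E; first exact: h.
rewrite big_setU1 /= ?big_set1 //.
by rewrite inE.
Qed.

Unset Implicit Arguments.
Theorem lemma3 (R : realType) (n : nat) (p q : 'I_n -> R) (m1 m2 : R)
  (d : measure_display) (T : measurableType d) (P : probability T R)
  (X Y : 'I_n -> {RV P >-> nat}) (A : {set 'I_n}) :
  is_distribution p -> is_distribution q -> 0 < m1 -> 0 < m2 ->
  (forall i, has_poisson_law (m1 * p i) (X i)) ->
  (forall i, has_poisson_law (m2 * q i) (Y i)) ->
  mutually_independent
    (fun j : ('I_n + 'I_n)%type => match j with inl i => X i | inr i => Y i end) ->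
  let S := fun w : T => \sum_(i in A) Zstat m1 m2 (X i w) (Y i w) in
  (p = q -> ('E_P[S] = 0)%E) /\
  ((m1 ^+ 2 * m2 ^+ 2 * (\sum_(i in A) `|p i - q i|) ^+ 2
     / (4 * n%:R + m1 + m2))%:E <= 'E_P[S])%E.
Proof.
move=> hp hq m10 m20 hX hY hind S.
have [p0 _] := hp; have [q0 _] := hq.
set M := m1 ^+ 2 + m2 ^+ 2.
have hXY : forall i x y, P (X i @^-1` [set x] `&` Y i @^-1` [set y]) =
    (pw R (m1 * p i) x * pw R (m2 * q i) y)%:E.
  move=> i x y; rewrite indep_pair //.
  by rewrite (law_pt (hX i)) (law_pt (hY i)).
have : forall i, exists s : R, (m1 * p i + m2 * q i + 2)^-1 <= s <= 1 /\
  (\int[P]_w (Zstat m1 m2 (X i w) (Y i w) + M)%:E =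
   (M + (m2 * (m1 * p i) - m1 * (m2 * q i)) ^+ 2 * s)%:E)%E.
  move=> i; apply: per_i; [by rewrite mulr_ge0 // ltW | by rewrite mulr_ge0 // ltW |].
  exact: hXY.
case/fin_all_exists => s hs.
set W := fun i w => Zstat m1 m2 (X i w) (Y i w) + M.
have W0 : forall i w, 0 <= W i w by move=> i w; exact: Zstat_ge.
have mW : forall i, measurable_fun setT (W i).
  by move=> i; apply: (@meas_g _ _ _ _ (X i) (Y i) (fun x y => Zstat m1 m2 x y + M)) => x y; exact: Zstat_ge.
set f1 := fun w => \sum_(i in A) W i w.
have intf1 : (\int[P]_w (f1 w)%:E = (\sum_(i in A) (M + (m2 * (m1 * p i) - m1 * (m2 * q i)) ^+ 2 * s i))%:E)%E.
  rewrite -sumEFin.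
  under eq_integral do rewrite /f1 -sumEFin -big_filter.
  rewrite ge0_integral_sum //; last 2 first.
  - by move=> i; apply/measurable_realfun.measurable_EFinP.
  - by move=> i w _; rewrite lee_fin.
  rewrite big_filter; apply: eq_bigr => i _.
  by have [_ ->] := hs i.
have mf1 : measurable_fun setT f1.
  have -> : f1 = fun w => \sum_(i <- [seq i <- index_enum 'I_n | i \in A]) W i w.
    by apply/funext => w; rewrite /f1 big_filter.
  exact: measurable_sum.
have if1 : P.-integrable setT (EFin \o f1).
  apply/integrableP; split; first exact/measurable_realfun.measurable_EFinP.
  rewrite (eq_integral (fun w => (f1 w)%:E)); last by move=> w _ /=; rewrite ger0_norm // sumr_ge0.
  by rewrite intf1 ltry.
have if2 : P.-integrable setT (EFin \o cst (#|A|%:R * M)).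
  exact: finite_measure_integrable_cst.
have ES : ('E_P[S] = (\sum_(i in A) (m2 * (m1 * p i) - m1 * (m2 * q i)) ^+ 2 * s i)%:E)%E.
  rewrite unlock.
  transitivity (\int[P]_w ((f1 w)%:E - ((cst (#|A|%:R * M)) w)%:E))%E.
    apply: eq_integral => w _; rewrite -EFinB /f1 /S /W big_split /= sumr_const.
    by rewrite mulr_natl addrK.
  rewrite integralB_EFin // intf1.
  have ic : (\int[P]_x (cst (#|A|%:R * M) x)%:E = (#|A|%:R * M)%:E)%E.
    transitivity (\int[P]_x (cst (#|A|%:R * M)%:E x))%E; first by [].
    rewrite integral_cst //.
    transitivity ((#|A|%:R * M)%:E * 1)%E; last by rewrite mule1.
    congr (_ * _)%E; exact: probability_setT.
  rewrite ic -EFinB; congr EFin.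
  by rewrite big_split /= sumr_const mulr_natl addrAC subrr add0r.
rewrite ES; split.
  move=> pq; rewrite big1 // => i _; rewrite pq.
  have -> : m2 * (m1 * q i) - m1 * (m2 * q i) = 0 by ring.
  by rewrite expr2 !mul0r.
rewrite lee_fin; apply: final_ineq => // i.
by have [/andP[] ] := hs i.
Qed.
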